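(* For all integers $m$ and $n$, the coefficients $N_{\overline{S}}(m,n)$, $N_{\overline{S}_1}(m,n)$ and $N_{\overline{S}_2}(m,n)$ are nonnegative.
   Context: $(a;q)_\infty=\prod_{k\ge0}(1-aq^k)$. Define \begin{align*} \overline{S}(z,q)&=\sum_{n=1}^\infty\frac{q^n(-q^{n+1};q)_\infty(q^{n+1};q)_\infty}{(zq^n;q)_\infty(z^{-1}q^n;q)_\infty}=\sum_{n\ge1}\sum_mN_{\overline{S}}(m,n)z^mq^n,\\ \overline{S}_1(z,q)&=\sum_{n=0}^\infty\frac{q^{2n+1}(-q^{2n+2};q)_\infty(q^{2n+2};q)_\infty}{(zq^{2n+1};q)_\infty(z^{-1}q^{2n+1};q)_\infty}=\sum_{n\ge1}\sum_mN_{\overline{S}_1}(m,n)z^mq^n,\\ \overline{S}_2(z,q)&=\sum_{n=1}^\infty\frac{q^{2n}(-q^{2n+1};q)_\infty(q^{2n+1};q)_\infty}{(zq^{2n};q)_\infty(z^{-1}q^{2n};q)_\infty}=\sum_{n\ge1}\sum_mN_{\overline{S}_2}(m,n)z^mq^n, \end{align*} the expansions being as formal power series in $q$ with Laurent polynomial coefficients in $z$. *)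

(* Defs.v *)
From mathcomp Require Import all_boot all_algebra.
Set Implicit Arguments. Unset Strict Implicit. Unset Printing Implicit Defensive.
Import GRing.Theory Num.Theory.
Local Open Scope ring_scope.

Definition fps (R : comNzRingType) := nat -> R.

Definition fps_one (R : comNzRingType) : fps R := fun n => (n == 0%N)%:R.

Definition fps_mul (R : comNzRingType) (f g : fps R) : fps R :=
  fun n => \sum_(i < n.+1) f i * g (n - i)%N.

Definition fps_prod (R : comNzRingType) (s : seq (fps R)) : fps R :=
  foldr (@fps_mul R) (@fps_one R) s.

Definition fps_shift (R : comNzRingType) (e : nat) (f : fps R) : fps R :=
  fun n => if (e <= n)%N then f (n - e)%N else 0.

Definition fps_lin (R : comNzRingType) (c : R) (e : nat) : fps R :=
  fun n => (n == 0%N)%:R - (if n == e then c else 0).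

(* the series 1/(1 - c q^e) = sum_j c^j q^(j e)  (used with e >= 1) *)
Definition fps_geom (R : comNzRingType) (c : R) (e : nat) : fps R :=
  fun n => if (e %| n)%N then c ^+ (n %/ e) else 0.

(* Infinite product prod_{k>=0} F k, for factors with F k = 1 + O(q^(k+1)):
   the coefficient of q^N only depends on the factors F 0, ..., F N. *)
Definition fps_infprod (R : comNzRingType) (F : nat -> fps R) : fps R :=
  fun N => fps_prod [seq F k | k <- iota 0 N.+1] N.

(* Infinite sum sum_{k>=0} F k, for terms with F k = O(q^k). *)
Definition fps_infsum (R : comNzRingType) (F : nat -> fps R) : fps R :=
  fun N => \sum_(k < N.+1) F k N.

(* (a q^s; q)_oo = prod_{k>=0} (1 - a q^(s+k)),  s >= 1 *)
Definition qpoch (R : comNzRingType) (a : R) (s : nat) : fps R :=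
  fps_infprod (fun k => fps_lin a (s + k)).

(* 1/(a q^s; q)_oo = prod_{k>=0} 1/(1 - a q^(s+k)),  s >= 1 *)
Definition qpoch_inv (R : comNzRingType) (a : R) (s : nat) : fps R :=
  fps_infprod (fun k => fps_geom a (s + k)).

(* Laurent polynomials in z with integer coefficients are represented in
   LR := Z[z][w] with w standing for z^-1; [lcoef p m] is the coefficient of
   z^m after substituting w = z^-1. *)
Definition LR := {poly {poly int}}.
Definition zz : LR := ('X : {poly int})%:P.
Definition zinv : LR := 'X.

Definition lcoef (p : LR) (m : int) : int :=
  \sum_(b < size p) (if (0 <= m + b%:Z)%R then (p`_b)`_(absz (m + b%:Z)) else 0).

(* generic summand  q^e (-q^(s);q)_oo (q^(s);q)_oo / ((z q^e;q)_oo (z^-1 q^e;q)_oo)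
   with s = e + 1 *)
Definition Sterm (e : nat) : fps LR := 
  fps_prod [:: fps_shift e (@fps_one _);
               qpoch (-1) e.+1; qpoch 1 e.+1;
               qpoch_inv zz e; qpoch_inv zinv e].

Definition Sbar : fps LR := fps_infsum (fun k => Sterm k.+1).
Definition Sbar1 : fps LR := fps_infsum (fun k => Sterm k.*2.+1).
Definition Sbar2 : fps LR := fps_infsum (fun k => Sterm k.+1.*2).

Definition N_Sbar (m : int) (n : nat) : int := lcoef (Sbar n) m.
Definition N_Sbar1 (m : int) (n : nat) : int := lcoef (Sbar1 n) m.
Definition N_Sbar2 (m : int) (n : nat) : int := lcoef (Sbar2 n) m.

(* Main.v *)
Require Import Defs.
From mathcomp Require Import all_boot all_algebra.
From mathcomp Require Import ring zify.
Import GRing.Theory Num.Theory.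
Set Implicit Arguments. Unset Strict Implicit. Unset Printing Implicit Defensive.
Local Open Scope ring_scope.
Definition uu : LR := zz * zinv - 1.
Definition inI (N : nat) (p : {poly LR}) :=
  exists d e, p = uu%:P * d + 'X^(N.+1) * e.
Definition eqI N (p q : {poly LR}) := inI N (p - q).

Definition lterm (p : LR) (m : int) (b : nat) : int :=
  if (0 <= m + b%:Z)%R then (p`_b)`_(absz (m + b%:Z)) else 0.

Lemma lcoefE K (p : LR) m : (size p <= K)%N -> lcoef p m = \sum_(b < K) lterm p m b.
Proof.
move=> hK; rewrite /lcoef (big_ord_widen K (lterm p m) hK) big_mkcond /=.
apply: eq_bigr => b _; case: ltnP => // hb.
by rewrite /lterm (nth_default 0 hb) coef0 if_same.
Qed.

Lemma lcoefD (p q : LR) m : lcoef (p + q) m = lcoef p m + lcoef q m.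
Proof.
set K := maxn (size p) (size q).
rewrite (@lcoefE K) ?size_add // (@lcoefE K p) ?leq_maxl // (@lcoefE K q) ?leq_maxr //.
rewrite -big_split /=; apply: eq_bigr => b _; rewrite /lterm.
by case: ifP => _; rewrite ?coefD ?addr0.
Qed.

Lemma lcoef0 m : lcoef 0 m = 0.
Proof. by rewrite /lcoef size_poly0 big_ord0. Qed.

Lemma lcoefN (p : LR) m : lcoef (- p) m = - lcoef p m.
Proof.
apply/eqP; rewrite -subr_eq0 opprK addrC -lcoefD.
by rewrite subrr lcoef0.
Qed.

Lemma shift_key (t : int) (r : {poly int}) :
  (if (0 <= t + 1)%R then ('X * r)`_(absz (t + 1)) else 0) =
  (if (0 <= t)%R then r`_(absz t) else 0).
Proof.
case: t => n.
  by rewrite -PoszD addn1 /= coefXM.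
rewrite NegzE; case: n => [|n] /=; [by rewrite subnn coefXM | by []].
Qed.

Lemma lcoef_zw (s : LR) m : lcoef (zz * (zinv * s)) m = lcoef s m.
Proof.
set L := (size s + size (zz * (zinv * s))%R)%N.
rewrite (@lcoefE L.+1) ?leqW ?leq_addl // (@lcoefE L s) ?leq_addr // big_ord_recl.
rewrite {1}/lterm /zz coefCM /zinv coefXM /= mulr0 coef0 if_same add0r.
apply: eq_bigr => b _; rewrite /lterm /bump /= coefCM (coefXM s) /=.
have -> : (m + (1 + b)%N%:Z = (m + b%:Z) + 1)%R by rewrite PoszD; ring.
exact: shift_key.
Qed.

Lemma lcoef_u (s : LR) m : lcoef (uu * s) m = 0.
Proof.
rewrite /uu mulrBl mul1r -mulrA lcoefD lcoefN lcoef_zw; exact: subrr.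
Qed.

Definition pos1 (p : {poly int}) := forall a, 0 <= p`_a.
Definition pos2 (p : LR) := forall b, pos1 p`_b.

Lemma lcoef_pos (p : LR) m : pos2 p -> 0 <= lcoef p m.
Proof.
move=> h; apply: sumr_ge0 => b _; case: ifP => // _; exact: h.
Qed.

Lemma coef_closed_mul (R : comNzRingType) (P : R -> Prop) :
  P 0 -> (forall x y, P x -> P y -> P (x + y)) -> (forall x y, P x -> P y -> P (x * y)) ->
  forall p q : {poly R}, (forall i, P p`_i) -> (forall i, P q`_i) -> forall i, P (p * q)`_i.
Proof.
move=> h0 hD hM p q hp hq i; rewrite coefM.
by apply: (big_ind P) => // j _; apply: hM.
Qed.

Lemma pos1D p q : pos1 p -> pos1 q -> pos1 (p + q).
Proof. by move=> hp hq a; rewrite coefD addr_ge0. Qed.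
Lemma pos1M p q : pos1 p -> pos1 q -> pos1 (p * q).
Proof.
apply: (@coef_closed_mul _ (fun x : int => 0 <= x)) => // x y; [exact: addr_ge0|exact: mulr_ge0].
Qed.
Lemma pos1_0 : pos1 0. Proof. by move=> a; rewrite coef0. Qed.
Lemma pos1_nat n : pos1 n%:R.
Proof. by move=> a; rewrite -polyC_natr coefC; case: eqP. Qed.
Lemma pos1_Xn k : pos1 'X^k.
Proof. by move=> a; rewrite coefXn. Qed.

Lemma pos2D p q : pos2 p -> pos2 q -> pos2 (p + q).
Proof. by move=> hp hq b; rewrite coefD; apply: pos1D. Qed.
Lemma pos2M p q : pos2 p -> pos2 q -> pos2 (p * q).
Proof.
apply: (@coef_closed_mul _ pos1); [exact: pos1_0|exact: pos1D|exact: pos1M].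
Qed.
Lemma pos2_0 : pos2 0. Proof. by move=> b; rewrite coef0; apply: pos1_0. Qed.
Lemma pos2_nat n : pos2 n%:R.
Proof. by move=> b; rewrite -polyC_natr coefC; case: eqP => _; [apply: pos1_nat|apply: pos1_0]. Qed.
Lemma pos2_zz k : pos2 (zz ^+ k).
Proof. by move=> b; rewrite /zz -polyC_exp coefC; case: eqP => _; [apply: pos1_Xn|apply: pos1_0]. Qed.
Lemma pos2_zinv k : pos2 (zinv ^+ k).
Proof. by move=> b; rewrite /zinv coefXn; apply: pos1_nat. Qed.

Definition pos3 (p : {poly LR}) := forall i, pos2 p`_i.
Lemma pos3D p q : pos3 p -> pos3 q -> pos3 (p + q).
Proof. by move=> hp hq b; rewrite coefD; apply: pos2D. Qed.
Lemma pos3M p q : pos3 p -> pos3 q -> pos3 (p * q).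
Proof.
apply: (@coef_closed_mul _ pos2); [exact: pos2_0|exact: pos2D|exact: pos2M].
Qed.
Lemma pos3_1 : pos3 1.
Proof. by move=> i; rewrite coef1; apply: pos2_nat. Qed.
Lemma pos3_Xn k : pos3 'X^k.
Proof. by move=> i; rewrite coefXn; apply: pos2_nat. Qed.
Lemma pos3_prod n (F : nat -> {poly LR}) : (forall k, pos3 (F k)) -> pos3 (\prod_(k < n) F k).
Proof. move=> h; apply: (big_ind pos3) => //; [exact: pos3_1|exact: pos3M]. Qed.

Definition T N (f : fps LR) : {poly LR} := \poly_(i < N.+1) f i.
Lemma T_coef N f i : (i <= N)%N -> (T N f)`_i = f i.
Proof. by move=> h; rewrite coef_poly ltnS h. Qed.

Lemma prodT N (s : seq (fps LR)) n : (n <= N)%N ->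
  fps_prod s n = (\prod_(f <- s) T N f)`_n.
Proof.
elim: s n => [|f s IH] n hn /=; first by rewrite big_nil coef1.
rewrite big_cons coefM /fps_mul; apply: eq_bigr => j _.
have hj : (j <= n)%N by rewrite -ltnS.
rewrite T_coef ?IH //; [exact: leq_trans (leq_subr _ _) hn | exact: leq_trans hj hn].
Qed.

Lemma coef_mul_one (p q : {poly LR}) n : q`_0 = 1 ->
  (forall i, (0 < i <= n)%N -> q`_i = 0) -> (p * q)`_n = p`_n.
Proof.
move=> h0 hi; rewrite coefM big_ord_recr /= subnn h0 mulr1 big1 ?add0r // => j _.
rewrite hi ?mulr0 //; have := ltn_ord j; rewrite subn_gt0 leq_subr => -> //.
Qed.

Definition ord1 (F : nat -> fps LR) :=
  forall k, F k 0%N = 1 /\ forall i, (0 < i <= k)%N -> F k i = 0.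

Lemma stabT N F n M : ord1 F -> (n <= N)%N -> (n < M)%N ->
  (\prod_(k < M) T N (F k))`_n = (\prod_(k < n.+1) T N (F k))`_n.
Proof.
move=> hF hn; elim: M => [|M IH] //; rewrite ltnS leq_eqVlt => /orP [/eqP -> //|hM].
rewrite big_ord_recr /= coef_mul_one ?IH //.
  by rewrite T_coef // (proj1 (hF _)).
move=> i /andP [i0 hi]; rewrite T_coef ?(proj2 (hF _)) ?i0 //=.
  exact: leq_trans hi (ltnW hM).
exact: leq_trans hi hn.
Qed.

Lemma infprodT N F n : ord1 F -> (n <= N)%N ->
  fps_infprod F n = (\prod_(k < N.+1) T N (F k))`_n.
Proof.
move=> hF hn; rewrite /fps_infprod (prodT _ hn) big_map.
have -> : iota 0 n.+1 = index_iota 0 n.+1 by rewrite /index_iota subn0.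
by rewrite big_mkord stabT.
Qed.
Lemma inI0 N : inI N 0.
Proof. by exists 0, 0; rewrite !mulr0 addr0. Qed.
Lemma inID N p q : inI N p -> inI N q -> inI N (p + q).
Proof. move=> [d [e ->]] [d' [e' ->]]; exists (d + d'), (e + e'); ring. Qed.
Lemma inIN N p : inI N p -> inI N (- p).
Proof. move=> [d [e ->]]; exists (- d), (- e); ring. Qed.
Lemma inIM N p c : inI N p -> inI N (p * c).
Proof. move=> [d [e ->]]; exists (d * c), (e * c); ring. Qed.
Lemma inIMl N p c : inI N p -> inI N (c * p).
Proof. by rewrite mulrC; apply: inIM. Qed.
Lemma inIu N c : inI N (uu%:P * c).
Proof. by exists c, 0; rewrite mulr0 addr0. Qed.
Lemma inI_trunc N (p : {poly LR}) : (forall i, (i <= N)%N -> p`_i = 0) -> inI N p.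
Proof.
move=> h; exists 0, (drop_poly N.+1 p); rewrite mulr0 add0r.
rewrite -{1}(poly_take_drop N.+1 p) mulrC.
suff -> : take_poly N.+1 p = 0 by rewrite add0r.
by apply/polyP=> i; rewrite coef_take_poly coef0; case: ltnP => // /h.
Qed.

Lemma eqI_refl N p : eqI N p p.
Proof. by rewrite /eqI subrr; apply: inI0. Qed.
Lemma eqI_sym N p q : eqI N p q -> eqI N q p.
Proof. by rewrite /eqI => /inIN; rewrite opprB. Qed.
Lemma eqI_trans N p q r : eqI N p q -> eqI N q r -> eqI N p r.
Proof. by move=> h1 h2; have := inID h1 h2; rewrite /eqI addrA subrK. Qed.
Lemma eqI_add N p q p' q' : eqI N p p' -> eqI N q q' -> eqI N (p + q) (p' + q').
Proof. by move=> h1 h2; have := inID h1 h2; rewrite /eqI; congr inI; ring. Qed.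
Lemma eqI_opp N p p' : eqI N p p' -> eqI N (- p) (- p').
Proof. by move=> h1; have := inIN h1; rewrite /eqI; congr inI; ring. Qed.
Lemma eqI_mul N p q p' q' : eqI N p p' -> eqI N q q' -> eqI N (p * q) (p' * q').
Proof.
move=> h1 h2; have := inID (inIM q h1) (inIMl p' h2); rewrite /eqI; congr inI; ring.
Qed.
Lemma eqI_trunc N (p q : {poly LR}) : (forall i, (i <= N)%N -> p`_i = q`_i) -> eqI N p q.
Proof. by move=> h; apply: inI_trunc => i hi; rewrite coefB h ?subrr. Qed.

Lemma ord1_lin c s : (0 < s)%N -> ord1 (fun k => fps_lin c (s + k)).
Proof.
move=> hs k; rewrite /fps_lin; split.
  have -> : (0 == s + k)%N = false by apply/negbTE/eqP; lia.
  by rewrite eqxx subr0.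
move=> i /andP [i0 hi].
have -> : (i == 0)%N = false by apply/negbTE/eqP; lia.
have -> : (i == s + k)%N = false by apply/negbTE/eqP; lia.
by rewrite subr0.
Qed.

Lemma ord1_geom c s : (0 < s)%N -> ord1 (fun k => fps_geom c (s + k)).
Proof.
move=> hs k; rewrite /fps_geom; split; first by rewrite dvdn0 div0n expr0.
move=> i /andP [i0 hi]; case: ifP => // hd.
have := dvdn_leq i0 hd; lia.
Qed.

Lemma T_shift N e : eqI N (T N (fps_shift e (@fps_one _))) 'X^e.
Proof.
apply: eqI_trunc => i hi; rewrite T_coef // coefXn /fps_shift /fps_one.
case: (leqP e i) => h.
  by rewrite subn_eq0 eqn_leq h andbT.
by rewrite (ltn_eqF h).
Qed.

Lemma T_lin N c j : eqI N (T N (fps_lin c j)) (1 - c%:P * 'X^j).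
Proof.
apply: eqI_trunc => i hi; rewrite T_coef // coefB coef1 coefCM coefXn /fps_lin.
by case: (i == j); rewrite ?mulr1 ?mulr0.
Qed.

Lemma T_lin_big N c j : (N < j)%N -> eqI N (T N (fps_lin c j)) 1.
Proof.
move=> hj; apply: eqI_trunc => i hi; rewrite T_coef // coef1 /fps_lin.
have -> : (i == j)%N = false by apply/negbTE/eqP; lia.
by rewrite subr0.
Qed.

Lemma T_geom_inv N c j : (0 < j)%N ->
  eqI N (T N (fps_geom c j) * (1 - c%:P * 'X^j)) 1.
Proof.
move=> hj; apply: eqI_trunc => i hi.
rewrite mulrBr mulr1 coefB coef1 mulrCA coefCM coefMXn T_coef //.
case: (ltnP i j) => h.
  rewrite mulr0 subr0 /fps_geom; case: (i =P 0)%N => [->|/eqP i0].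
    by rewrite dvdn0 div0n expr0.
  case: ifP => // hd; have := dvdn_leq _ hd; lia.
rewrite T_coef; last by lia.
have -> : (i == 0)%N = false by apply/negbTE/eqP; lia.
rewrite /fps_geom -(subnKC h) dvdn_addr // divnDl // divnn hj.
rewrite addKn; case: ifP => _; last by rewrite mulr0 subrr.
by rewrite add1n exprS subrr.
Qed.

Lemma pos3_T_geom N c j : (forall k, pos2 (c ^+ k)) -> pos3 (T N (fps_geom c j)).
Proof.
move=> hc i; rewrite coef_poly; case: ifP => _; last exact: pos2_0.
rewrite /fps_geom; case: ifP => _; [exact: hc | exact: pos2_0].
Qed.

Lemma pos3_GW N j : pos3 (T N (fps_geom zz j) + T N (fps_geom zinv j) - 1).
Proof.
move=> i; rewrite coefB coefD coef1; case: (i =P 0)%N => [->|_].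
  rewrite !T_coef // /fps_geom dvdn0 div0n !expr0 addrK; exact: (pos2_nat 1).
rewrite subr0; apply: pos2D; exact: pos3_T_geom (@pos2_zz) i || exact: pos3_T_geom (@pos2_zinv) i.
Qed.

Lemma key N j : (0 < j)%N ->
  eqI N (T N (fps_lin (-1) j) * T N (fps_lin 1 j) * T N (fps_geom zz j) * T N (fps_geom zinv j))
        (T N (fps_geom zz j) + T N (fps_geom zinv j) - 1).
Proof.
move=> hj.
set g := T N (fps_geom zz j); set w := T N (fps_geom zinv j).
have hg := T_geom_inv N zz hj; have hw := T_geom_inv N zinv hj.
rewrite -/g in hg; rewrite -/w in hw.
apply: (@eqI_trans _ _ ((1 - (-1)%:P * 'X^j) * (1 - 1%:P * 'X^j) * g * w)).
  by apply: eqI_mul; [apply: eqI_mul; [apply: eqI_mul; apply: T_lin|]|]; apply: eqI_refl.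
set x := 'X^j : {poly LR}.
set Lz := 1 - zz%:P * x; set Lw := 1 - zinv%:P * x.
set al := g * Lz - 1; set be := w * Lw - 1.
have hal : inI N al by [].
have hbe : inI N be by [].
have hu : (zz%:P * zinv%:P - 1 : {poly LR}) = uu%:P by rewrite /uu polyCB polyCM polyC1.
have E : (1 - (-1)%:P * x) * (1 - 1%:P * x) * g * w - (g + w - 1) =
   uu%:P * (x * x * g * w) + (g + w - 1) * (al + be + al * be) - (Lw * al + Lz * be) * g * w.
  rewrite -hu polyCN polyC1 /al /be /Lz /Lw; ring.
rewrite /eqI E; apply: inID; first apply: inID.
- exact: inIu.
- apply: inIMl; apply: inID; [exact: inID|exact: inIM].
- apply: inIN; apply: inIM; apply: inIM; apply: inID; exact: inIMl.
Qed.

Lemma eqI_prod N n (F G : nat -> {poly LR}) :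
  (forall k, eqI N (F k) (G k)) -> eqI N (\prod_(k < n) F k) (\prod_(k < n) G k).
Proof.
move=> h; elim: n => [|n IH]; first by rewrite !big_ord0; apply: eqI_refl.
by rewrite !big_ord_recr; apply: eqI_mul.
Qed.

Lemma lcoef_eqI N p q m : eqI N p q -> pos3 q -> 0 <= lcoef p`_N m.
Proof.
move=> [d [e' h]] hq.
have -> : p = q + (uu%:P * d + 'X^(N.+1) * e') by rewrite -h addrC subrK.
rewrite !coefD coefCM coefXnM ltnSn !lcoefD lcoef_u lcoef0 !addr0.
exact: lcoef_pos.
Qed.

Lemma T_infprod N F : ord1 F -> eqI N (T N (fps_infprod F)) (\prod_(k < N.+1) T N (F k)).
Proof. by move=> hF; apply: eqI_trunc => i hi; rewrite T_coef // (infprodT hF hi). Qed.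

Lemma Sterm_pos e N m : (0 < e)%N -> 0 <= lcoef (Sterm e N) m.
Proof.
move=> he; rewrite /Sterm (prodT _ (leqnn N)) !big_cons big_nil.
set a := fun k => T N (fps_lin (-1) (e.+1 + k)).
set b := fun k => T N (fps_lin 1 (e.+1 + k)).
set g := fun k => T N (fps_geom zz (e.+1 + k)).
set w := fun k => T N (fps_geom zinv (e.+1 + k)).
have hA : eqI N (T N (qpoch (-1) e.+1)) ((\prod_(k < N) a k) * 1).
  apply: eqI_trans (T_infprod _ (ord1_lin _ _)) _ => //.
  rewrite big_ord_recr; apply: eqI_mul; first exact: eqI_refl.
  apply: T_lin_big => /=; lia.
have hB : eqI N (T N (qpoch 1 e.+1)) ((\prod_(k < N) b k) * 1).
  apply: eqI_trans (T_infprod _ (ord1_lin _ _)) _ => //.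
  rewrite big_ord_recr; apply: eqI_mul; first exact: eqI_refl.
  apply: T_lin_big => /=; lia.
have hG : eqI N (T N (qpoch_inv zz e)) (T N (fps_geom zz e) * \prod_(k < N) g k).
  apply: eqI_trans (T_infprod N (ord1_geom zz he)) _.
  rewrite big_ord_recl addn0; apply: eqI_mul; first exact: eqI_refl.
  have -> : (\prod_(i < N) T N (fps_geom zz (e + lift ord0 i))) = \prod_(k < N) g k.
    by apply: eq_bigr => k _; rewrite /g /= /bump leq0n add1n addnS addSn.
  exact: eqI_refl.
have hW : eqI N (T N (qpoch_inv zinv e)) (T N (fps_geom zinv e) * \prod_(k < N) w k).
  apply: eqI_trans (T_infprod N (ord1_geom zinv he)) _.
  rewrite big_ord_recl addn0; apply: eqI_mul; first exact: eqI_refl.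
  have -> : (\prod_(i < N) T N (fps_geom zinv (e + lift ord0 i))) = \prod_(k < N) w k.
    by apply: eq_bigr => k _; rewrite /w /= /bump leq0n add1n addnS addSn.
  exact: eqI_refl.
apply: (@lcoef_eqI _ _ ('X^e * (T N (fps_geom zz e) * T N (fps_geom zinv e) *
   \prod_(k < N) (g k + w k - 1)))).
  apply: eqI_trans.
    apply: eqI_mul; first exact: T_shift.
    apply: eqI_mul; first exact: hA.
    apply: eqI_mul; first exact: hB.
    apply: eqI_mul; first exact: hG.
    apply: eqI_mul; first exact: hW.
    exact: eqI_refl.
  have -> : (\prod_(k < N) a k * 1 * ((\prod_(k < N) b k * 1) *
     (T N (fps_geom zz e) * \prod_(k < N) g k * (T N (fps_geom zinv e) * \prod_(k < N) w k * 1))))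
     = T N (fps_geom zz e) * T N (fps_geom zinv e) * \prod_(k < N) (a k * b k * g k * w k).
    rewrite !big_split /=; ring.
  apply: eqI_mul; first exact: eqI_refl.
  apply: eqI_mul; first exact: eqI_refl.
  apply: (@eqI_prod N N (fun k => a k * b k * g k * w k) (fun k => g k + w k - 1)) => k.
  exact: key.
apply: pos3M; first exact: pos3_Xn.
apply: pos3M; first by apply: pos3M; [apply: pos3_T_geom; exact: pos2_zz|apply: pos3_T_geom; exact: pos2_zinv].
apply: (@pos3_prod N (fun k => g k + w k - 1)) => k; exact: pos3_GW.
Qed.

Lemma lcoef_sum_ge0 n (F : nat -> LR) m :
  (forall k, 0 <= lcoef (F k) m) -> 0 <= lcoef (\sum_(k < n) F k) m.
Proof.
move=> h; apply: (big_ind (fun p => 0 <= lcoef p m)) => //.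
  by rewrite lcoef0.
by move=> x y hx hy; rewrite lcoefD addr_ge0.
Qed.

Theorem theorem2p16 (m : int) (n : nat) :
  0 <= N_Sbar m n /\ 0 <= N_Sbar1 m n /\ 0 <= N_Sbar2 m n.
Proof.
rewrite /N_Sbar /N_Sbar1 /N_Sbar2 /Sbar /Sbar1 /Sbar2 /fps_infsum.
split; first by apply: (@lcoef_sum_ge0 _ (fun k => Sterm k.+1 n)) => k; apply: Sterm_pos.
split; first by apply: (@lcoef_sum_ge0 _ (fun k => Sterm k.*2.+1 n)) => k; apply: Sterm_pos.
by apply: (@lcoef_sum_ge0 _ (fun k => Sterm k.+1.*2 n)) => k; apply: Sterm_pos; rewrite double_gt0.
Qed.
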